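(* If $E$ is a hereditary approximation space having a countable basis, then $\bigcup_{\alpha<\aleph_1}\mathbf{D}_\alpha(E)=\mathbf{\Delta}^0_2(E)$.
   Context: Approximation relation: a binary relation $\ll$ on a topological basis $\mathcal{B}$ of $E$ such that for all $U,V,T\in\mathcal{B}$: (1) $U\ll V\Rightarrow V\subseteq U$; (2) $U\subseteq T$ and $U\ll V$ imply $T\ll V$; (3) for every $x\in U$ there is $W\in\mathcal{B}$ with $x\in W$ and $U\ll W$; (4) every sequence $(U_i)$ in $\mathcal{B}$ with $U_i\ll U_{i+1}$ for all $i$ has $\bigcap_iU_i\ne\emptyset$. Hereditary: for every closed $C\subseteq E$, the relation $\ll_C$ on $\{C\cap U:U\in\mathcal{B},C\cap U\ne\emptyset\}$, given by $P\ll_C Q$ iff $P=C\cap U$, $Q=C\cap V$ for some $U,V\in\mathcal{B}$ with $U\ll V$, is an approximation relation for the subspace $C$. A hereditary approximation space is one admitting a hereditary approximation relation. $\mathbf{\Sigma}^0_2(E)$: countable unions of differences $U\setminus V$ of open sets; $\mathbf{\Pi}^0_2(E)$: complements; $\mathbf{\Delta}^0_2(E)$: their intersection. Parity: ordinal $\lambda+n$ ($\lambda$ zero or limit, $n<\omega$) has the parity of $n$; $\alpha\sim\beta$ means same parity. $D_\alpha((A_\beta)_{\beta<\alpha})=\bigcup_{\beta<\alpha,\beta\not\sim\alpha}(A_\beta\setminus\bigcup_{\gamma<\beta}A_\gamma)$, and $\mathbf{D}_\alpha(E)$ is the class of such sets with all $A_\beta$ open. *)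

(* Defs.v *)
From Stdlib Require Import Classical.

Definition set (E : Type) := E -> Prop.

Record topology (E : Type) := Topology {
  open : set E -> Prop;
  open_full : open (fun _ => True);
  open_union : forall F : set E -> Prop,
      (forall U, F U -> open U) -> open (fun x => exists U, F U /\ U x);
  open_inter : forall U V, open U -> open V -> open (fun x => U x /\ V x)
}.
Arguments open {E} t _.

Definition closed {E} (T : topology E) (C : set E) : Prop :=
  open T (fun x => ~ C x).

Definition subset {E} (A B : set E) : Prop := forall x, A x -> B x.

Definition is_basis {E} (T : topology E) (B : set E -> Prop) : Prop :=
  (forall U, B U -> open T U) /\
  (forall U x, open T U -> U x -> exists W, B W /\ W x /\ subset W U).

Definition second_countable {E} (T : topology E) : Prop :=
  exists (B : set E -> Prop) (b : nat -> set E),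
    is_basis T B /\ forall U, B U -> exists n, U = b n.

(* Conditions (1)-(4) for a relation [rel] on the family [Bf] of subsets of
   the space [S] (a subset of E; S is the whole of E for the space itself,
   a closed subset C for the subspace C). *)
Definition approx_conditions {E} (S : set E) (Bf : set E -> Prop)
    (rel : set E -> set E -> Prop) : Prop :=
  (forall U V, Bf U -> Bf V -> rel U V -> subset V U) /\
  (forall U V T, Bf U -> Bf V -> Bf T -> subset U T -> rel U V -> rel T V) /\
  (forall U x, Bf U -> S x -> U x -> exists W, Bf W /\ W x /\ rel U W) /\
  (forall Us : nat -> set E, (forall i, Bf (Us i)) ->
      (forall i, rel (Us i) (Us (Datatypes.S i))) ->
      exists x, S x /\ forall i, Us i x).

Definition approx_relation {E} (T : topology E) (B : set E -> Prop)
    (rel : set E -> set E -> Prop) : Prop :=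
  is_basis T B /\ approx_conditions (fun _ => True) B rel.

Definition trace_family {E} (B : set E -> Prop) (C : set E) (P : set E) : Prop :=
  exists U, B U /\ (forall x, P x <-> C x /\ U x) /\ (exists x, C x /\ U x).

Definition trace_rel {E} (B : set E -> Prop) (rel : set E -> set E -> Prop)
    (C : set E) (P Q : set E) : Prop :=
  exists U V, B U /\ B V /\ (forall x, P x <-> C x /\ U x) /\
              (forall x, Q x <-> C x /\ V x) /\ rel U V.

Definition hereditary_approx_relation {E} (T : topology E) (B : set E -> Prop)
    (rel : set E -> set E -> Prop) : Prop :=
  approx_relation T B rel /\
  forall C, closed T C ->
    approx_conditions C (trace_family B C) (trace_rel B rel C).

Definition hereditary_approx_space {E} (T : topology E) : Prop :=
  exists B rel, hereditary_approx_relation T B rel.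

Definition Sigma02 {E} (T : topology E) (S : set E) : Prop :=
  exists U V : nat -> set E, (forall n, open T (U n)) /\ (forall n, open T (V n)) /\
    forall x, S x <-> exists n, U n x /\ ~ V n x.

Definition Pi02 {E} (T : topology E) (S : set E) : Prop :=
  Sigma02 T (fun x => ~ S x).

Definition Delta02 {E} (T : topology E) (S : set E) : Prop :=
  Sigma02 T S /\ Pi02 T S.

(* A countable ordinal alpha < aleph_1 is represented by a countable
   well-ordered type (its set of predecessors {beta | beta < alpha}). *)
Record cord := Cord {
  ci : Type;
  clt : ci -> ci -> Prop;
  clt_irrefl : forall x, ~ clt x x;
  clt_trans : forall x y z, clt x y -> clt y z -> clt x z;
  clt_total : forall x y, clt x y \/ x = y \/ clt y x;
  clt_wf : well_founded clt;
  cenc : ci -> nat;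
  cenc_inj : forall x y, cenc x = cenc y -> x = y
}.

Definition osucc {I} (lt : I -> I -> Prop) (g b : I) : Prop :=
  lt g b /\ forall d, lt g d -> ~ lt d b.

(* parity of an element beta = lambda + n (lambda zero or limit):
   [opar lt beta p] iff n is odd exactly when p = true. *)
Inductive opar {I} (lt : I -> I -> Prop) : I -> bool -> Prop :=
| opar_lim : forall b, ~ (exists g, osucc lt g b) -> opar lt b false
| opar_succ : forall g b p, osucc lt g b -> opar lt g p -> opar lt b (negb p).

(* parity of the ordinal alpha itself (the order type of ci a) *)
Definition tpar (a : cord) (p : bool) : Prop :=
  (exists m, (forall y, ~ clt a m y) /\ opar (clt a) m (negb p)) \/
  ((~ exists m, forall y, ~ clt a m y) /\ p = false).

Definition D_op {E} (a : cord) (A : ci a -> set E) : set E :=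
  fun x => exists b : ci a,
    (exists pb pa, opar (clt a) b pb /\ tpar a pa /\ pb <> pa) /\
    A b x /\ forall g, clt a g b -> ~ A g x.

Definition D_class {E} (T : topology E) (a : cord) (S : set E) : Prop :=
  exists A : ci a -> set E, (forall b, open T (A b)) /\
    forall x, S x <-> D_op a A x.

Definition D_union {E} (T : topology E) (S : set E) : Prop :=
  exists a : cord, D_class T a S.

(* Main.v *)
Require Import Defs.
From Stdlib Require Import Classical FunctionalExtensionality PropExtensionality ProofIrrelevance ClassicalEpsilon Lia Arith.

Lemma set_ext {E} (A B : set E) : (forall x, A x <-> B x) -> A = B.
Proof. intro H. apply functional_extensionality. intro x. apply propositional_extensionality. apply H. Qed.

Lemma open_ext {E} (T : topology E) (A B : set E) : open T A -> (forall x, A x <-> B x) -> open T B.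
Proof. intros HA H. rewrite <- (set_ext _ _ H). exact HA. Qed.

Lemma open_fam {E} (T : topology E) (F : set E -> Prop) (B : set E) :
  (forall U, F U -> open T U) -> (forall x, B x <-> exists U, F U /\ U x) -> open T B.
Proof. intros H1 H2. eapply open_ext. apply (open_union _ T F H1). intro x; rewrite H2; tauto. Qed.

Lemma open_empty {E} (T : topology E) : open T (fun _ => False).
Proof. apply (open_fam T (fun _ => False)). tauto. intros x; split; [tauto| intros [U [[] _]]]. Qed.

Lemma open_or {E} (T : topology E) (A B : set E) : open T A -> open T B -> open T (fun x => A x \/ B x).
Proof. intros HA HB. apply (open_fam T (fun U => U = A \/ U = B)).
  intros U [->| ->]; auto.
  intro x; split. intros [H|H]; eauto. intros [U [[->| ->] H]]; auto. Qed.

Lemma cmin (a : cord) (P : ci a -> Prop) : (exists b, P b) -> exists b, P b /\ forall g, clt a g b -> ~ P g.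
Proof.
  intros [b Hb]. apply NNPP; intro HN.
  assert (forall c, ~ P c). { intro c. induction (clt_wf a c) as [c _ IH].
    intro Pc. apply HN. exists c. split; auto. }
  eapply H; eauto. Qed.

Lemma opar_exists (a : cord) b : exists p, opar (clt a) b p.
Proof.
  induction (clt_wf a b) as [b _ IH].
  destruct (classic (exists g, osucc (clt a) g b)) as [[g Hg]|Hn].
  - destruct (IH g (proj1 Hg)) as [p Hp]. exists (negb p). econstructor 2; eauto.
  - exists false. constructor 1; auto. Qed.

Lemma osucc_unique (a : cord) g g' b : osucc (clt a) g b -> osucc (clt a) g' b -> g = g'.
Proof. intros [H1 H2] [H3 H4]. destruct (clt_total a g g') as [H|[H|H]]; auto.
  - exfalso; exact (H2 _ H H3).
  - exfalso; exact (H4 _ H H1). Qed.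

Lemma opar_unique (a : cord) b p q : opar (clt a) b p -> opar (clt a) b q -> p = q.
Proof.
  intro H. revert q. induction H as [b Hb| g b p Hs Hp IH]; intros q Hq.
  - inversion Hq; subst; auto. exfalso; apply Hb; eauto.
  - inversion Hq; subst. exfalso; apply H; eauto.
    rewrite (osucc_unique _ _ _ _ Hs H) in IH. rewrite (IH _ H0). reflexivity. Qed.

Lemma tpar_unique (a : cord) p q : tpar a p -> tpar a q -> p = q.
Proof.
  intros [[m [Hm Hp]]|[Hm Hp]] [[m' [Hm' Hq]]|[Hm' Hq]].
  - assert (m = m'). { destruct (clt_total a m m') as [H|[H|H]]; auto.
      exfalso; eapply Hm; eauto. exfalso; eapply Hm'; eauto. }
    subst. pose proof (opar_unique _ _ _ _ Hp Hq). destruct p, q; simpl in *; congruence.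
  - exfalso; apply Hm'; eauto.
  - exfalso; apply Hm; eauto.
  - congruence. Qed.

Definition good (a : cord) b := exists pb pa, opar (clt a) b pb /\ tpar a pa /\ pb <> pa.

Lemma D_Sigma {E} (T : topology E) (a : cord) (A : ci a -> set E) (P : ci a -> Prop) :
  (forall b, open T (A b)) ->
  Sigma02 T (fun x => exists b, P b /\ A b x /\ forall g, clt a g b -> ~ A g x).
Proof.
  intro HA.
  exists (fun n x => exists b, cenc a b = n /\ P b /\ A b x).
  exists (fun n x => exists b, cenc a b = n /\ exists g, clt a g b /\ A g x).
  split; [|split].
  - intro n. apply (open_fam T (fun W => exists b, cenc a b = n /\ P b /\ W = A b)).
    intros U [b [_ [_ ->]]]; auto.
    intro x; split. intros [b [H1 [H2 H3]]]. exists (A b); eauto.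
    intros [U [[b [H1 [H2 ->]]] H3]]; eauto.
  - intro n. apply (open_fam T (fun W => exists b g, cenc a b = n /\ clt a g b /\ W = A g)).
    intros U [b [g [_ [_ ->]]]]; auto.
    intro x; split. intros [b [H1 [g [H2 H3]]]]. exists (A g); split; eauto.
    intros [U [[b [g [H1 [H2 ->]]]] H3]]; eauto.
  - intro x; split.
    + intros [b [H1 [H2 H3]]]. exists (cenc a b). split; eauto.
      intros [b' [Hb' [g [Hg Ag]]]]. apply cenc_inj in Hb'. subst. eapply H3; eauto.
    + intros [n [[b [Hn [Pb Ab]]] HV]]. exists b; repeat split; auto.
      intros g Hg Ag. apply HV. eauto.
Qed.

Lemma D_Delta {E} (T : topology E) (a : cord) S : D_class T a S -> Delta02 T S.
Proof.
  intros [A [HA HS]]. split.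
  - destruct (D_Sigma T a A (good a) HA) as [U [V [HU [HV H]]]].
    exists U, V; split; auto; split; auto. intro x; rewrite HS, <- H. unfold D_op, good. tauto.
  - destruct (D_Sigma T a A (fun b => ~ good a b) HA) as [U [V [HU [HV H]]]].
    exists (fun n => match n with 0 => fun _ => True | Datatypes.S m => U m end).
    exists (fun n => match n with 0 => fun x => exists b, A b x | Datatypes.S m => V m end).
    split; [|split].
    + intros [|n]; auto. apply open_full.
    + intros [|n]; auto. apply (open_fam T (fun W => exists b, W = A b)).
      intros W [b ->]; auto. intro x; split. intros [b Hb]; eauto. intros [W [[b ->] Hb]]; eauto.
    + intro x. rewrite HS. split.
      * intro HD. destruct (classic (exists b, A b x)) as [Hb|Hb].
        -- destruct (cmin a _ Hb) as [b [Ab Hmin]].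
           assert (Hx : exists b, ~ good a b /\ A b x /\ forall g, clt a g b -> ~ A g x).
           { exists b; repeat split; auto. intro Hg; apply HD. exists b. split; auto. }
           apply H in Hx. destruct Hx as [n Hn]. exists (Datatypes.S n); auto.
        -- exists 0. split; auto.
      * intros [[|n] Hn].
        -- intros [b [_ [Ab _]]]. apply (proj2 Hn). eauto.
        -- assert (Hx : exists n, U n x /\ ~ V n x) by eauto. apply H in Hx.
           destruct Hx as [b [Hg [Ab Hm]]]. intros [b' [Hg' [Ab' Hm']]].
           assert (b = b'). { destruct (clt_total a b b') as [Hl|[Hl|Hl]]; auto.
             exfalso; eapply Hm'; eauto. exfalso; eapply Hm; eauto. }
           subst. apply Hg. exact Hg'.
Qed.

Definition mono {E} (F W A : set E) :=
  (forall z, F z -> W z -> A z) \/ (forall z, F z -> W z -> ~ A z).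

Lemma avoid {E} (T : topology E) B rel C (U V : set E) :
  is_basis T B -> approx_conditions C (trace_family B C) (trace_rel B rel C) ->
  open T U -> open T V ->
  (forall W, B W -> (exists z, C z /\ W z) -> exists z, C z /\ W z /\ ~ (U z /\ ~ V z)) ->
  forall Q, trace_family B C Q -> exists Q', trace_family B C Q' /\ trace_rel B rel C Q Q' /\
     forall y, Q' y -> ~ (U y /\ ~ V y).
Proof.
  intros [HBo HBb] [H1 [H2 [H3 H4]]] HU HV Hyp Q HQt.
  pose proof HQt as [U0 [HU0 [HQ [x0 [Cx0 U0x0]]]]].
  destruct (classic (exists y, C y /\ U0 y /\ U y)) as [[y [Cy [U0y Uy]]]|Hn].
  - destruct (HBb (fun w => U0 w /\ U w) y) as [B1 [HB1 [B1y sB1]]].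
    apply open_inter; auto. auto.
    destruct (Hyp B1 HB1) as [z [Cz [B1z Hz]]]. eauto.
    assert (Vz : V z). { apply NNPP; intro; apply Hz; split; auto. apply (sB1 z B1z). }
    destruct (HBb (fun w => B1 w /\ V w) z) as [B2 [HB2 [B2z sB2]]].
    apply open_inter; auto. auto.
    set (Q2 := fun w => C w /\ B2 w).
    assert (T2 : trace_family B C Q2). { exists B2; split; auto. split. intro; unfold Q2; tauto. eauto. }
    destruct (H3 Q2 z T2 Cz (conj Cz B2z)) as [W [TW [Wz R2]]].
    pose proof (H1 _ _ T2 TW R2) as sW.
    exists W; split; auto; split.
    + apply (H2 Q2 W Q); auto. intros w [Cw B2w]. apply HQ. split; auto.
      apply (sB1 w (proj1 (sB2 w B2w))). 
    + intros w Ww [_ HnV]. apply HnV. apply (sB2 w (proj2 (sW w Ww))).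
  - destruct (H3 Q x0 HQt Cx0 (proj2 (HQ x0) (conj Cx0 U0x0))) as [W [TW [Wx R]]].
    pose proof (H1 _ _ HQt TW R) as sW.
    exists W; split; auto; split; auto.
    intros w Ww [Uw _]. apply (proj1 (HQ w)) in sW; [|auto]. apply Hn. exists w; tauto.
Qed.

Lemma baire {E} (T : topology E) B rel (A : set E) :
  hereditary_approx_relation T B rel -> Delta02 T A ->
  forall C, closed T C -> (exists x, C x) ->
  exists W, open T W /\ (exists z, C z /\ W z) /\ mono C W A.
Proof.
  intros [[HB _] Hher] [[U [V [HU [HV HA]]]] [U' [V' [HU' [HV' HA']]]]] C HC [x0 Cx0].
  apply NNPP; intro HN.
  pose proof (Hher C HC) as Happ. pose proof Happ as [H1 [H2 [H3 H4]]].
  set (Wk := fun k => if Nat.even k then U (Nat.div2 k) else U' (Nat.div2 k)).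
  set (Zk := fun k => if Nat.even k then V (Nat.div2 k) else V' (Nat.div2 k)).
  assert (Hav : forall k Q, exists Q', trace_family B C Q -> (trace_family B C Q' /\
       trace_rel B rel C Q Q' /\ forall y, Q' y -> ~ (Wk k y /\ ~ Zk k y))).
  { intros k Q. destruct (classic (trace_family B C Q)) as [HQ|HQ]; [|exists Q; tauto].
    assert (Ho : open T (Wk k) /\ open T (Zk k)).
    { unfold Wk, Zk; destruct (Nat.even k); auto. }
    destruct (avoid T B rel C (Wk k) (Zk k) HB Happ (proj1 Ho) (proj2 Ho)) with (Q := Q)
      as [Q' HQ']; auto.
    2: { exists Q'; intros _; exact HQ'. }
    intros W HW [z [Cz Wz]]. apply NNPP; intro Hall. apply HN. exists W.
    split; [apply (proj1 HB); auto|]. split; [eauto|].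
    unfold mono, Wk, Zk in *. destruct (Nat.even k) eqn:Ek.
    - left. intros w Cw Ww. apply HA. exists (Nat.div2 k).
      apply NNPP; intro; apply Hall; eauto.
    - right. intros w Cw Ww. apply HA'. exists (Nat.div2 k).
      apply NNPP; intro; apply Hall; eauto. }
  set (nxt := fun k Q => proj1_sig (constructive_indefinite_description _ (Hav k Q))).
  assert (Hnxt : forall k Q, trace_family B C Q -> trace_family B C (nxt k Q) /\
       trace_rel B rel C Q (nxt k Q) /\ forall y, nxt k Q y -> ~ (Wk k y /\ ~ Zk k y)).
  { intros k Q. unfold nxt. destruct (constructive_indefinite_description _ (Hav k Q)); simpl; auto. }
  destruct (proj2 HB (fun _ => True) x0 (open_full _ T) I) as [U0 [HU0 [U0x _]]].
  set (f := fix f n := match n with 0 => fun w => C w /\ U0 w | Datatypes.S k => nxt k (f k) end).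
  assert (Hf : forall n, trace_family B C (f n)).
  { induction n. exists U0; split; auto; split; [intro; simpl; tauto|eauto].
    apply (Hnxt n (f n) IHn). }
  destruct (H4 f Hf) as [x [Cx Hx]].
  { intro i. apply (Hnxt i (f i) (Hf i)). }
  destruct (classic (A x)) as [Ax|Ax].
  - apply HA in Ax. destruct Ax as [n [Un Vn]].
    apply (proj2 (proj2 (Hnxt (2*n) (f (2*n)) (Hf _))) x (Hx (Datatypes.S (2*n)))).
    unfold Wk, Zk. rewrite Nat.even_even, Nat.div2_double. auto.
  - apply HA' in Ax. destruct Ax as [n [Un Vn]].
    apply (proj2 (proj2 (Hnxt (2*n+1) (f (2*n+1)) (Hf _))) x (Hx (Datatypes.S (2*n+1)))).
    unfold Wk, Zk. rewrite Nat.even_odd, Nat.div2_odd'. auto.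
Qed.

Definition der {E} (T : topology E) (A G : set E) : set E := fun x =>
  G x /\ forall W, open T W -> W x ->
    (exists z, G z /\ W z /\ A z) /\ (exists z, G z /\ W z /\ ~ A z).

Definition inter {E} (SS : set E -> Prop) : set E := fun x => forall S, SS S -> S x.

Definition tclosed {E} (T : topology E) A (G : set E -> Prop) :=
  (forall SS, (forall S, SS S -> G S) -> G (inter SS)) /\ (forall S, G S -> G (der T A S)).

Definition stage {E} (T : topology E) A (F : set E) := forall G, tclosed T A G -> G F.

Lemma stage_tclosed {E} (T : topology E) A : tclosed T A (stage T A).
Proof. split.
  - intros SS H G HG. apply (proj1 HG). intros S HS. apply H; auto.
  - intros S H G HG. apply (proj2 HG). apply H; auto. Qed.

Lemma der_sub {E} (T : topology E) A G : subset (der T A G) G.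
Proof. intros x [H _]; auto. Qed.

Lemma der_closed {E} (T : topology E) A G : closed T G -> closed T (der T A G).
Proof.
  intro HG. unfold closed.
  apply (open_fam T (fun W => W = (fun x => ~ G x) \/ (open T W /\
     ~ ((exists z, G z /\ W z /\ A z) /\ (exists z, G z /\ W z /\ ~ A z))))).
  - intros U [->|[HU _]]; auto.
  - intro x. split.
    + intro Hx. destruct (classic (G x)) as [Gx|Gx]; [|exists (fun x => ~ G x); auto].
      apply NNPP; intro HN. apply Hx. split; auto. intros W HW Wx.
      apply NNPP; intro HN2. apply HN. exists W; auto.
    + intros [U [[->|[HU HN]] Ux]]. intros [Gx _]; auto.
      intros [_ Hx]. apply HN, Hx; auto.
Qed.

Lemma inter_closed {E} (T : topology E) (SS : set E -> Prop) :
  (forall S, SS S -> closed T S) -> closed T (inter SS).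
Proof.
  intro H. unfold closed.
  apply (open_fam T (fun W => exists S, SS S /\ W = (fun x => ~ S x))).
  - intros U [S [HS ->]]. apply H; auto.
  - intro x; split.
    + intro Hx. apply NNPP; intro HN. apply Hx. intros S HS. apply NNPP; intro.
      apply HN. exists (fun x => ~ S x). eauto.
    + intros [U [[S [HS ->]] Hx]] HI. apply Hx, HI; auto.
Qed.

Lemma stage_closed {E} (T : topology E) A F : stage T A F -> closed T F.
Proof.
  intro H. apply (H (fun F => closed T F)). split.
  - apply inter_closed. - intros; apply der_closed; auto. Qed.

Lemma stage_ind {E} (T : topology E) A (P : set E -> Prop) :
  (forall SS, (forall S, SS S -> stage T A S /\ P S) -> P (inter SS)) ->
  (forall S, stage T A S -> P S -> P (der T A S)) ->
  forall F, stage T A F -> P F.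
Proof.
  intros H1 H2 F HF.
  assert (stage T A F /\ P F); [|tauto].
  apply (HF (fun F => stage T A F /\ P F)). split.
  - intros SS H. split. apply (proj1 (stage_tclosed T A)). intros; apply H; auto. apply H1; auto.
  - intros S [HS PS]. split. apply (proj2 (stage_tclosed T A)); auto. apply H2; auto.
Qed.

Definition extreme {E} (T : topology E) A (c : set E) :=
  forall x, stage T A x -> subset c x -> ~ subset x c -> subset c (der T A x).

Lemma lemma1 {E} (T : topology E) A c : stage T A c -> extreme T A c ->
  forall x, stage T A x -> subset c x \/ subset x (der T A c).
Proof.
  intros Hc Hext. apply stage_ind.
  - intros SS H. destruct (classic (forall S, SS S -> subset c S)) as [Hall|Hn].
    + left. intros y cy S HS. apply Hall; auto.
    + right. apply not_all_ex_not in Hn. destruct Hn as [S HS].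
      apply imply_to_and in HS. destruct HS as [HS HnS].
      destruct (H S HS) as [_ [H'|H']]; [contradiction|].
      intros y Hy. apply H', Hy; auto.
  - intros x Hx [H|H].
    + destruct (classic (subset x c)) as [Hxc|Hxc].
      * right. assert (x = c) by (apply set_ext; intro; split; auto). subst. intros y Hy; auto.
      * left. apply Hext; auto.
    + right. intros y Hy. apply H, (der_sub T A x), Hy.
Qed.

Lemma all_extreme {E} (T : topology E) A : forall c, stage T A c -> extreme T A c.
Proof.
  apply stage_ind.
  - intros SS H x Hx Hsx Hxs.
    destruct (classic (exists S, SS S /\ subset S x /\ ~ subset x S)) as [[S [HS [H1 H2]]]|Hn].
    + intros y Hy. apply (proj2 (H S HS) x Hx H1 H2). apply Hy; auto.
    + exfalso. apply Hxs. intros y Hy S HS.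
      destruct (H S HS) as [HSt HSe].
      destruct (lemma1 T A S HSt HSe x Hx) as [H1|H1].
      * destruct (classic (subset x S)) as [H2|H2]. apply H2; auto.
        exfalso; apply Hn; eauto.
      * apply (der_sub T A S), H1, Hy.
  - intros c Hc Hext x Hx Hsx Hxs.
    destruct (lemma1 T A c Hc Hext x Hx) as [H|H]; [|contradiction].
    destruct (classic (subset x c)) as [H2|H2].
    + assert (x = c) by (apply set_ext; intro; split; auto). subst. intros y Hy; auto.
    + intros y Hy. apply (Hext x Hx H H2). apply (der_sub T A c); auto.
Qed.

Lemma compar {E} (T : topology E) A F G : stage T A F -> stage T A G ->
  subset F G \/ subset G (der T A F).
Proof. intros HF HG. apply lemma1; auto. apply all_extreme; auto. Qed.

Lemma compar2 {E} (T : topology E) A F G : stage T A F -> stage T A G ->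
  subset F G \/ subset G F.
Proof. intros HF HG. destruct (compar T A F G HF HG) as [H|H]; auto.
  right. intros y Hy. apply (der_sub T A F), H, Hy. Qed.

Definition NDP {E} (T : topology E) A :=
  forall F, stage T A F -> (exists x, F x) -> exists y, F y /\ ~ der T A F y.

Definition NS {E} (T : topology E) A := {F : set E | stage T A F /\ exists x, F x}.

Definition cl {E} (T : topology E) A (p q : NS T A * bool) : Prop :=
  (subset (proj1_sig (fst q)) (proj1_sig (fst p)) /\ ~ subset (proj1_sig (fst p)) (proj1_sig (fst q)))
  \/ (proj1_sig (fst p) = proj1_sig (fst q) /\ snd p = false /\ snd q = true).

Lemma ns_eq {E} (T : topology E) A (p q : NS T A) : proj1_sig p = proj1_sig q -> p = q.
Proof. destruct p as [p hp], q as [q hq]; simpl; intro; subst. f_equal. apply proof_irrelevance. Qed.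

Lemma cl_irrefl {E} (T : topology E) A x : ~ cl T A x x.
Proof. intros [[H1 H2]|[_ [H1 H2]]]. auto. congruence. Qed.

Lemma cl_trans {E} (T : topology E) A x y z : cl T A x y -> cl T A y z -> cl T A x z.
Proof.
  destruct x as [[X hX] bx], y as [[Y hY] wy], z as [[Z hZ] bz]; unfold cl; simpl.
  intros [[H1 H2]|[H1 [H2 H3]]] [[H4 H5]|[H4 [H6 H7]]]; subst.
  - left. split. intros a h; auto. intro H; apply H2. intros a h; auto.
  - left; auto.
  - left; auto.
  - congruence.
Qed.

Lemma cl_total {E} (T : topology E) A x y : cl T A x y \/ x = y \/ cl T A y x.
Proof.
  destruct x as [[X hX] bx], y as [[Y hY] by']; unfold cl; simpl.
  destruct (classic (subset X Y)) as [H1|H1]; destruct (classic (subset Y X)) as [H2|H2].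
  - assert (X = Y) by (apply set_ext; intro; split; auto). subst.
    assert (hX = hY) by apply proof_irrelevance. subst.
    destruct bx, by'; [right;left;reflexivity| right;right;right;simpl;auto | left;right;simpl;auto | right;left;reflexivity].
  - right; right. left; auto.
  - left. left; auto.
  - exfalso. destruct (compar2 T A X Y (proj1 hX) (proj1 hY)); auto.
Qed.

Lemma wf_from_min {X} (R : X -> X -> Prop) :
  (forall P : X -> Prop, (exists x, P x) -> exists x, P x /\ forall y, R y x -> ~ P y) -> well_founded R.
Proof.
  intros H x. apply NNPP; intro Hx.
  destruct (H (fun x => ~ Acc R x)) as [m [Hm Hmin]]; eauto.
  apply Hm. constructor. intros y Hy. apply NNPP. apply Hmin; auto.
Qed.

Lemma cl_wf {E} (T : topology E) A : NDP T A -> well_founded (cl T A).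
Proof.
  intro Hnd. apply wf_from_min. intros P [e0 Pe0].
  set (SS := fun G => exists e, P e /\ proj1_sig (fst e) = G).
  set (H := inter (fun G => stage T A G /\ forall S, SS S -> subset S G)).
  assert (HH : stage T A H).
  { apply (proj1 (stage_tclosed T A)). intros S [HS _]; auto. }
  assert (Hub : forall S, SS S -> subset S H).
  { intros S HS y Sy G [_ HG]. apply (HG S HS y Sy). }
  assert (Hex : exists e, P e /\ proj1_sig (fst e) = H).
  { apply NNPP; intro Hn.
    assert (Hd : subset H (der T A H)).
    { intros y Hy. apply Hy. split. apply (proj2 (stage_tclosed T A)); auto.
      intros S [e [Pe <-]].
      destruct (compar T A H (proj1_sig (fst e)) HH (proj1 (proj2_sig (fst e)))) as [Hs|Hs]; auto.
      exfalso. apply Hn. exists e. split; auto. apply set_ext. intro z; split; auto.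
      apply (Hub _ (ex_intro _ e (conj Pe eq_refl))). }
    destruct (proj2 (proj2_sig (fst e0))) as [x0 Hx0].
    destruct (Hnd H HH) as [y [Hy Hny]].
    exists x0. apply (Hub _ (ex_intro _ e0 (conj Pe0 eq_refl))); auto.
    apply Hny, Hd, Hy. }
  destruct (classic (exists e, P e /\ proj1_sig (fst e) = H /\ snd e = false)) as [[e [Pe [He Hb]]]|Hnf].
  - exists e. split; auto. intros y Hy Py.
    destruct Hy as [[H1 H2]|[H1 [H2 H3]]]; [|congruence].
    apply H2. rewrite He. apply (Hub _ (ex_intro _ y (conj Py eq_refl))).
  - destruct Hex as [e [Pe He]]. exists e. split; auto. intros y Hy Py.
    destruct Hy as [[H1 H2]|[H1 [H2 H3]]].
    + apply H2. rewrite He. apply (Hub _ (ex_intro _ y (conj Py eq_refl))).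
    + apply Hnf. exists y. repeat split; auto. congruence.
Qed.

Definition cenc' {E} (T : topology E) A (c : set E -> nat) (e : NS T A * bool) : nat :=
  2 * c (proj1_sig (fst e)) + (if snd e then 1 else 0).

Lemma cenc'_inj {E} (T : topology E) A c :
  (forall F G, stage T A F -> stage T A G -> (exists x, F x) -> (exists x, G x) -> c F = c G -> F = G) ->
  forall x y, cenc' T A c x = cenc' T A c y -> x = y.
Proof.
  intros Hc [[X hX] bx] [[Y hY] by']; unfold cenc'; simpl. intro Heq.
  assert (c X = c Y /\ bx = by') as [H1 H2].
  { destruct bx, by'; split; auto; lia. }
  subst. pose proof (Hc X Y (proj1 hX) (proj1 hY) (proj2 hX) (proj2 hY) H1). subst.
  f_equal. apply ns_eq. reflexivity.
Qed.

Definition mkcord {E} (T : topology E) A (c : set E -> nat) (Hnd : NDP T A)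
  (Hc : forall F G, stage T A F -> stage T A G -> (exists x, F x) -> (exists x, G x) -> c F = c G -> F = G)
  : cord :=
  Cord (NS T A * bool) (cl T A) (cl_irrefl T A) (cl_trans T A) (cl_total T A) (cl_wf T A Hnd)
    (cenc' T A c) (cenc'_inj T A c Hc).

Lemma osucc_ft {E} (T : topology E) A p : osucc (cl T A) (p, false) (p, true).
Proof.
  split. right; simpl; auto.
  intros [q b] H1 H2. unfold cl in *; simpl in *.
  destruct H1 as [[H1 H1']|[H1 [_ H1']]]; destruct H2 as [[H2 H2']|[H2 [H2'' _]]].
  - auto.
  - apply H1'. rewrite H2. intros a h; auto.
  - apply H2'. rewrite H1. intros a h; auto.
  - congruence.
Qed.

Lemma opar_false {E} (T : topology E) A (Hnd : NDP T A) :
  forall e, snd e = false -> opar (cl T A) e false.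
Proof.
  intro e. induction (cl_wf T A Hnd e) as [e _ IH]. intro He.
  destruct (classic (exists g, osucc (cl T A) g e)) as [[g Hg]|Hn]; [|constructor 1; auto].
  destruct e as [p eb]; simpl in He; subst eb.
  destruct g as [q b].
  assert (Hs : subset (proj1_sig p) (proj1_sig q) /\ ~ subset (proj1_sig q) (proj1_sig p)).
  { destruct Hg as [[H|[_ [_ H]]] _]; [exact H|discriminate]. }
  destruct b.
  - assert (Hq : opar (cl T A) (q, false) false). { apply IH. left; exact Hs. reflexivity. }
    pose proof (opar_succ _ _ _ _ (osucc_ft T A q) Hq) as Hq'. simpl in Hq'.
    apply (opar_succ _ _ _ _ Hg Hq').
  - exfalso. apply (proj2 Hg (q, true)). right; simpl; auto. left; exact Hs.
Qed.

Lemma opar_true {E} (T : topology E) A (Hnd : NDP T A) p : opar (cl T A) (p, true) true.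
Proof. apply (opar_succ _ _ _ _ (osucc_ft T A p) (opar_false T A Hnd (p, false) eq_refl)). Qed.

Definition Om {E} (T : topology E) (A F : set E) : set E :=
  fun x => exists W, open T W /\ W x /\ forall z, F z -> W z -> ~ A z.

Definition Aop {E} (T : topology E) A (e : NS T A * bool) : set E :=
  if snd e then (fun x => ~ der T A (proj1_sig (fst e)) x)
  else (fun x => ~ proj1_sig (fst e) x \/ Om T A (proj1_sig (fst e)) x).

Lemma Aop_open {E} (T : topology E) A e : open T (Aop T A e).
Proof.
  destruct e as [[F hF] bb]; unfold Aop; simpl. destruct bb.
  - apply der_closed. exact (stage_closed T A F (proj1 hF)).
  - apply open_or. exact (stage_closed T A F (proj1 hF)).
    apply (open_fam T (fun W => open T W /\ forall z, F z -> W z -> ~ A z)).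
    intros U [HU _]; auto.
    intro x; split. intros [W [H1 [H2 H3]]]; eauto. intros [W [[H1 H3] H2]]; exists W; auto.
Qed.

Lemma tpar_false {E} (T : topology E) A c Hnd Hc : tpar (mkcord T A c Hnd Hc) false.
Proof.
  destruct (classic (exists m, forall y, ~ clt (mkcord T A c Hnd Hc) m y)) as [[m Hm]|Hn].
  - left. exists m. split; auto. destruct m as [p bm]. destruct bm.
    + simpl. apply opar_true; auto.
    + exfalso. apply (Hm (p, true)). simpl. right; simpl; auto.
  - right; auto.
Qed.

Lemma key {E} (T : topology E) A c Hnd Hc x :
  D_op (mkcord T A c Hnd Hc) (Aop T A) x <-> A x.
Proof.
  set (Fx := inter (fun G => stage T A G /\ G x)).
  assert (HFs : stage T A Fx). { apply (proj1 (stage_tclosed T A)). intros S [HS _]; auto. }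
  assert (HFx : Fx x). { intros G [_ HG]; auto. }
  assert (HFm : forall G, stage T A G -> G x -> subset Fx G). { intros G HG Gx y Hy. apply Hy; auto. }
  assert (Hnd' : ~ der T A Fx x).
  { intro Hd. destruct (Hnd Fx HFs (ex_intro _ x HFx)) as [y [Hy Hny]]. apply Hny.
    apply (HFm (der T A Fx)); auto. apply (proj2 (stage_tclosed T A)); auto. }
  set (p := exist (fun F => stage T A F /\ exists x, F x) Fx (conj HFs (ex_intro _ x HFx)) : NS T A).
  assert (Hbig : forall e, subset Fx (proj1_sig (fst e)) -> ~ subset (proj1_sig (fst e)) Fx -> ~ Aop T A e x).
  { intros [[G hG'] bb] H1 H2; simpl in *. pose proof (proj1 hG') as hG.
    assert (Hd : der T A G x).
    { destruct (compar T A G Fx hG HFs) as [H|H]; [contradiction|]. apply H; auto. }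
    unfold Aop; simpl. destruct bb.
    - intro H; apply H, Hd.
    - intros [H|[W [HW [Wx HWm]]]]. apply H, (der_sub T A G), Hd.
      destruct (proj2 Hd W HW Wx) as [[z [Gz [Wz Az]]] _]. apply (HWm z); auto. }
  assert (HT : Aop T A (p, true) x). { unfold Aop; simpl. exact Hnd'. }
  assert (HF : Aop T A (p, false) x <-> ~ A x).
  { unfold Aop; simpl. split.
    - intros [H|[W [HW [Wx HWm]]]]. contradiction. apply HWm; auto.
    - intro Ax. right. apply NNPP; intro HN. apply Hnd'. split; auto. intros W HW Wx.
      split; [|eauto]. apply NNPP; intro HN2. apply HN. exists W. repeat split; auto.
      intros z Fz Wz Az. apply HN2; eauto. }
  split.
  - intros [[q bb] [[pb [pa [Hpb [Hpa Hne]]]] [Ha Hmin]]].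
    assert (Hq : proj1_sig q = Fx).
    { destruct (compar2 T A (proj1_sig q) Fx (proj1 (proj2_sig q)) HFs) as [H|H].
      - destruct (classic (subset Fx (proj1_sig q))) as [H'|H'].
        + apply set_ext; intro; split; auto.
        + exfalso. apply (Hmin (p, true)); auto. simpl. left. simpl. split; auto.
      - apply set_ext; intro; split; auto.
        destruct (classic (subset (proj1_sig q) Fx)) as [H'|H']. apply H'.
        exfalso. apply (Hbig (q, bb)); auto. }
    destruct bb.
    + apply NNPP; intro Ax. apply (Hmin (p, false)). simpl. right; simpl; auto.
      apply HF; auto.
    + exfalso. apply Hne.
      rewrite (opar_unique _ _ _ _ Hpb (opar_false T A Hnd (q, false) eq_refl)).
      rewrite (tpar_unique _ _ _ Hpa (tpar_false T A c Hnd Hc)). reflexivity.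
  - intro Ax. exists (p, true). split; [|split; auto].
    + exists true, false. split. apply opar_true; auto. split. apply tpar_false. discriminate.
    + intros [q bb] Hl Hq. simpl in Hl. destruct Hl as [[H1 H2]|[H1 [H2 _]]]; simpl in *.
      * apply (Hbig (q, bb)); auto.
      * subst bb. apply HF; auto. unfold Aop in *; simpl in *. rewrite H1 in Hq. exact Hq.
Qed.

Lemma mono_der {E} (T : topology E) A F W z : mono F W A -> open T W -> W z -> ~ der T A F z.
Proof.
  intros Hm HW Wz [_ Hd]. destruct (Hd W HW Wz) as [[z1 [F1 [W1 A1]]] [z2 [F2 [W2 A2]]]].
  destruct Hm as [Hm|Hm]. apply A2, Hm; auto. apply (Hm z1); auto. Qed.

Theorem corollary3p16 (E : Type) (T : topology E) :
  hereditary_approx_space T -> second_countable T ->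
  forall S : set E, D_union T S <-> Delta02 T S.
Proof.
  intros [B [rel Hher]] [B2 [b [HB2 Henum]]] S. split.
  - intros [a Ha]. exact (D_Delta T a S Ha).
  - intro HD.
    assert (Hnd : NDP T S).
    { intros F HF [x Fx].
      destruct (baire T B rel S Hher HD F (stage_closed T S F HF) (ex_intro _ x Fx))
        as [W [HW [[z [Fz Wz]] Hm]]].
      exists z. split; auto. apply (mono_der T S F W z Hm HW Wz). }
    assert (Hce : forall F, exists n, stage T S F -> (exists x, F x) ->
        open T (b n) /\ (exists z, F z /\ b n z) /\ mono F (b n) S).
    { intro F. destruct (classic (stage T S F /\ exists x, F x)) as [[HF Hne]|Hn];
        [|exists 0; tauto].
      destruct (baire T B rel S Hher HD F (stage_closed T S F HF) Hne)
        as [W [HW [[z [Fz Wz]] Hm]]].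
      destruct (proj2 HB2 W z HW Wz) as [W2 [HW2 [W2z sW2]]].
      destruct (Henum W2 HW2) as [n ->]. exists n. intros _ _.
      split. apply (proj1 HB2); auto. split. eauto.
      destruct Hm as [Hm|Hm]; [left|right]; intros y Fy Wy; apply Hm; auto; apply sW2; auto. }
    set (c := fun F => proj1_sig (constructive_indefinite_description _ (Hce F))).
    assert (Hcp : forall F, stage T S F -> (exists x, F x) ->
        open T (b (c F)) /\ (exists z, F z /\ b (c F) z) /\ mono F (b (c F)) S).
    { intro F. unfold c. destruct (constructive_indefinite_description _ (Hce F)); simpl; auto. }
    assert (Hc : forall F G, stage T S F -> stage T S G -> (exists x, F x) -> (exists x, G x) ->
        c F = c G -> F = G).
    { intros F G HF HG nF nG Heq.
      destruct (Hcp F HF nF) as [oF [[zF [FzF bF]] mF]].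
      destruct (Hcp G HG nG) as [oG [[zG [GzG bG]] mG]].
      rewrite Heq in oF, bF, mF.
      destruct (compar T S F G HF HG) as [H1|H1];
        [|exfalso; apply (mono_der T S F _ zG mF oF bG); apply H1; auto].
      destruct (compar T S G F HG HF) as [H2|H2];
        [|exfalso; apply (mono_der T S G _ zF mG oG bF); apply H2; auto].
      apply set_ext; intro; split; auto. }
    exists (mkcord T S c Hnd Hc). exists (Aop T S). split.
    + intro e. apply Aop_open.
    + intro x. symmetry. apply key.
Qed.
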